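(* Let $E$ be a finite set and $\omega:2^E\to[0,\infty)$ not identically zero. Let $r$ and $s$ be the maximum and minimum cardinality of sets $S$ with $\omega(S)>0$, $\ell=r-s$, and let $y_1,\dots,y_\ell$ be indeterminates indexed by $\ell$ new elements $1,\dots,\ell$. Define $f_k(\omega)=\sum_{S\subseteq E,|S|=k}\omega(S)$ and $Z(\omega^\flat;\mathbf{y})=\sum_{S\subseteq E}\omega(S)\prod_{e\in S}y_e\; e_{r-|S|}(y_1,\dots,y_\ell)$, where $e_j$ is the $j$-th elementary symmetric function (and $e_j=0$ for $j<0$ or $j>\ell$). Then the sequence $(f_k(\omega): s\le k\le r)$ is logarithmically concave with no internal zeros if and only if the polynomial in $y_1,\dots,y_\ell$ obtained from $Z(\omega^\flat;\mathbf{y})$ by setting $y_e=1$ for all $e\in E$ is Rayleigh.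
   Context: A multiaffine polynomial $Z$ in indeterminates $\{y_c\}$ with nonnegative coefficients is Rayleigh if $\Delta Z\{i,j\}=Z_iZ_j-Z_{ij}Z\ge0$ (subscripts = partial derivatives) for all distinct indices $i,j$ and all positive values of the indeterminates. A nonnegative sequence $(a_k)$ is logarithmically concave if $a_k^2\ge a_{k-1}a_{k+1}$ for all interior $k$, and has no internal zeros if $i<j<k$ and $a_ia_k\ne0$ imply $a_j\ne0$. *)

(* Defs.v *)
From HB Require Import structures.
From mathcomp Require Import all_boot all_order all_algebra.
From mathcomp Require Import mpoly.
Set Implicit Arguments. Unset Strict Implicit. Unset Printing Implicit Defensive.
Import Order.TTheory GRing.Theory Num.Theory.
Local Open Scope ring_scope.

Definition multiaffine (R : ringType) (n : nat) (Z : {mpoly R[n]}) : Prop :=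
  forall m : 'X_{1..n}, m \in msupp Z -> forall i : 'I_n, (m i <= 1)%N.

Definition Rayleigh (R : realFieldType) (n : nat) (Z : {mpoly R[n]}) : Prop :=
  [/\ multiaffine Z,
      (forall m : 'X_{1..n}, 0 <= Z@_m) &
      forall (i j : 'I_n), i != j ->
      forall y : 'I_n -> R, (forall c, 0 < y c) ->
        0 <= (mderiv i Z).@[y] * (mderiv j Z).@[y]
             - (mderiv j (mderiv i Z)).@[y] * Z.@[y]].

Definition fk (R : realFieldType) (E : finType) (omega : {set E} -> R) (k : nat) : R :=
  \sum_(S : {set E} | #|S| == k) omega S.

Definition log_concave_on (R : realFieldType) (a : nat -> R) (s r : nat) : Prop :=
  forall k : nat, (s < k < r)%N -> a k.-1 * a k.+1 <= a k ^+ 2.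

Definition no_internal_zeros_on (R : realFieldType) (a : nat -> R) (s r : nat) : Prop :=
  forall i j k : nat, (s <= i)%N -> (i < j)%N -> (j < k)%N -> (k <= r)%N ->
    a i * a k != 0 -> a j != 0.

(* Z(omega^flat; y) with y_e = 1 for e in E: a polynomial in the ell = r - s
   new indeterminates y_1..y_ell:  sum_S omega(S) e_{r-|S|}(y_1..y_ell),
   with e_j = 0 for j < 0 (i.e. |S| > r) and for j > ell (automatic for mesym). *)
Definition Zflat_spec (R : realFieldType) (E : finType) (omega : {set E} -> R)
    (r ell : nat) : {mpoly R[ell]} :=
  \sum_(S : {set E}) (if (#|S| <= r)%N then omega S *: mesym ell R (r - #|S|) else 0).

(* Main.v *)
Require Import Defs.
From HB Require Import structures.
From mathcomp Require Import all_boot all_order all_algebra.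
From mathcomp Require Import mpoly.
From mathcomp Require Import reals.
From mathcomp Require Import ring lra zify.
Import Order.TTheory GRing.Theory Num.Theory.
Local Open Scope ring_scope.
Set Implicit Arguments. Unset Strict Implicit. Unset Printing Implicit Defensive.

Section Gen.
Variable R : realFieldType.
Variable n : nat.

Lemma sum_setU1 (V : nmodType) (t : 'I_n) (P : pred {set 'I_n}) (F : {set 'I_n} -> V) :
 \sum_(g : {set 'I_n} | (t \in g) && P g) F g = \sum_(g : {set 'I_n} | (t \notin g) && P (t |: g)) F (t |: g).
Proof.
rewrite (reindex_onto (fun g => t |: g) (fun g => g :\ t)) /=; last first.
  by move=> g /andP[tg _]; rewrite setD1K.
apply: eq_bigl => g; rewrite setU11 /=.
case tg: (t \in g) => /=.
  rewrite andbC; apply/negP => /andP[/eqP e _].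
  have : t \notin (t |: g) :\ t by rewrite in_setD1 eqxx.
  by rewrite e tg.
by rewrite setU1K ?tg // eqxx andbT.
Qed.

Definition G (c : {set 'I_n} -> R) : {mpoly R[n]} :=
  \sum_(h : {set 'I_n}) c h *: 'X_[mesym1 h].

Lemma G_coef c m : (G c)@_m = \sum_(h : {set 'I_n}) c h * (mesym1 h == m)%:R.
Proof.
rewrite /G raddf_sum; apply: eq_bigr => h _.
by rewrite -[LHS]/(mcoeff m _) mcoeffZ mcoeffX.
Qed.

Lemma G_eval c (y : 'I_n -> R) :
  (G c).@[y] = \sum_(h : {set 'I_n}) c h * \prod_(k in h) y k.
Proof.
rewrite /G raddf_sum; apply: eq_bigr => h _.
rewrite -[LHS]/(meval y _) mevalZ mevalX; congr (_ * _).
rewrite [RHS]big_mkcond; apply: eq_bigr => k _.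
by rewrite mnmE; case: (k \in h).
Qed.

Lemma G_deriv c x :
  mderiv x (G c) = G (fun g => if x \in g then 0 else c (x |: g)).
Proof.
rewrite /G raddf_sum.
rewrite (bigID (fun h : {set 'I_n} => x \in h)) /= [X in _ + X]big1 ?addr0; last first.
  by move=> h /negbTE hi; rewrite mderivZ mderivX mnmE hi scale0r scaler0.
rewrite [RHS](bigID (fun h : {set 'I_n} => x \in h)) /= [X in X + _]big1 ?add0r; last first.
  by move=> h ->; rewrite scale0r.
rewrite (eq_bigl (fun h : {set 'I_n} => (x \in h) && xpredT h)); last by move=> h; rewrite andbT.
rewrite sum_setU1 [RHS](eq_bigl (fun h : {set 'I_n} => (x \notin h) && xpredT (x |: h))); last by move=> h; rewrite andbT.
apply: eq_bigr => g /andP[ig _]; rewrite (negbTE ig).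
rewrite mderivZ mderivX mnmE setU11 scalerA mulr1.
congr (_ *: 'X_[_]); apply/mnmP => k.
rewrite mnmBE /mesym1 !mnmE in_setU1.
case: (eqVneq x k) => [<-|ne] /=.
  by rewrite (negbTE ig).
by rewrite subn0.
Qed.


Lemma G_ext c c' : c =1 c' -> G c = G c'.
Proof. by move=> e; apply: eq_bigr => h _; rewrite e. Qed.

Lemma G_multiaffine c : multiaffine (G c).
Proof.
move=> m; rewrite mcoeff_msupp G_coef => nz i.
case: (pickP (fun h : {set 'I_n} => mesym1 h == m)) => [h /eqP <- | none].
  by rewrite /mesym1 mnmE; case: (i \in h).
by move: nz; rewrite big1 ?eqxx // => h _; rewrite none mulr0.
Qed.

Lemma G_coef_ge0 c : (forall h, 0 <= c h) -> forall m, 0 <= (G c)@_m.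
Proof.
by move=> c0 m; rewrite G_coef; apply: sumr_ge0 => h _; rewrite mulr_ge0 ?ler0n.
Qed.

Variable a : nat -> R.

Definition cf (U : {set 'I_n}) (m : nat) (g : {set 'I_n}) : R :=
  if g \subset U then a (#|g| + m)%N else 0.

Definition Psi (y : 'I_n -> R) (U : {set 'I_n}) (m : nat) : R :=
  \sum_(g : {set 'I_n} | g \subset U) a (#|g| + m)%N * \prod_(k in g) y k.

Lemma G_cf_eval (U : {set 'I_n}) (m : nat) (y : 'I_n -> R) : (G (cf U m)).@[y] = Psi y U m.
Proof.
rewrite G_eval /Psi [RHS]big_mkcond; apply: eq_bigr => g _.
by rewrite /cf; case: (g \subset U); rewrite ?mul0r.
Qed.

Lemma G_cf_deriv (U : {set 'I_n}) (m : nat) (x : 'I_n) : x \in U -> mderiv x (G (cf U m)) = G (cf (U :\ x) m.+1).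
Proof.
move=> xU; rewrite G_deriv; apply: G_ext => g.
rewrite /cf subsetD1; case xg: (x \in g) => /=; first by rewrite andbF.
rewrite andbT subUset sub1set xU /= cardsU1 xg add1n addSnnS.
by [].
Qed.

Lemma Psi_rec (y : 'I_n -> R) (U : {set 'I_n}) (m : nat) (x : 'I_n) : x \in U ->
  Psi y U m = Psi y (U :\ x) m + y x * Psi y (U :\ x) m.+1.
Proof.
move=> xU; rewrite /Psi (bigID (fun g : {set 'I_n} => x \in g)) /= addrC.
congr (_ + _).
  by apply: eq_bigl => g; rewrite subsetD1.
rewrite (eq_bigl (fun g : {set 'I_n} => (x \in g) && (g \subset U))); last first.
  by move=> g; rewrite andbC.
rewrite sum_setU1 mulr_sumr; apply: eq_big => g.
  by rewrite subUset sub1set xU subsetD1 andbC.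
move=> /andP[xg _]; rewrite cardsU1 xg add1n addSnnS big_setU1 //=.
by rewrite mulrCA.
Qed.

Lemma Psi_set0 (y : 'I_n -> R) (m : nat) : Psi y set0 m = a m.
Proof.
rewrite /Psi (big_pred1 set0); first by rewrite cards0 big_set0 mulr1.
by move=> g; rewrite subset0.
Qed.

End Gen.

Section Seq.
Variable R : realFieldType.

Definition good (b : nat -> R) :=
  [/\ forall n, 0 <= b n, forall n, b n * b n.+2 <= b n.+1 ^+ 2 &
      forall i j k, (i < j)%N -> (j < k)%N -> 0 < b i -> 0 < b k -> 0 < b j].

Lemma pos_split (b : nat -> R) w i : (forall n, 0 <= b n) -> 0 < w ->
  0 < b i + w * b i.+1 -> 0 < b i \/ 0 < b i.+1.
Proof.
move=> b0 w0 h; case: (ltrP 0 (b i)) => hi; first by left.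
right; have bi : b i = 0 by apply/eqP; rewrite eq_le hi b0.
by move: h; rewrite bi add0r pmulr_rgt0.
Qed.

Lemma good_shift b w : good b -> 0 < w -> good (fun n => b n + w * b n.+1).
Proof.
move=> [b0 lc niz] w0.
have key : forall n, b n * b n.+3 <= b n.+1 * b n.+2.
  move=> n; case: (ltrP 0 (b n)) => h0; last first.
    have -> : b n = 0 by apply/eqP; rewrite eq_le h0 b0.
    by rewrite mul0r mulr_ge0.
  case: (ltrP 0 (b n.+3)) => h3; last first.
    have -> : b n.+3 = 0 by apply/eqP; rewrite eq_le h3 b0.
    by rewrite mulr0 mulr_ge0.
  have h1 : 0 < b n.+1 by apply: (niz n _ n.+3).
  have h2 : 0 < b n.+2 by apply: (niz n _ n.+3).
  have l1 := lc n; have l2 := lc n.+1.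
  have p12 : 0 < b n.+1 * b n.+2 by rewrite mulr_gt0.
  rewrite -(ler_pM2r p12).
  have : (b n * b n.+2) * (b n.+1 * b n.+3) <= b n.+1 ^+ 2 * b n.+2 ^+ 2.
    by apply: ler_pM => //; rewrite mulr_ge0.
  by rewrite !expr2; nra.
split.
- by move=> n; rewrite addr_ge0 // mulr_ge0 // ltW.
- move=> n; have l0 := lc n; have l1 := lc n.+1; have k := key n.
  rewrite -subr_ge0.
  have -> : (b n.+1 + w * b n.+2) ^+ 2 - (b n + w * b n.+1) * (b n.+2 + w * b n.+3)
    = (b n.+1 ^+ 2 - b n * b n.+2) + w * (b n.+1 * b n.+2 - b n * b n.+3)
      + w ^+ 2 * (b n.+2 ^+ 2 - b n.+1 * b n.+3) by ring.
  apply: addr_ge0; first apply: addr_ge0.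
  + by rewrite subr_ge0.
  + by apply: mulr_ge0; [exact: ltW | rewrite subr_ge0].
  + by apply: mulr_ge0; [rewrite exprn_ge0 // ltW | rewrite subr_ge0].
- move=> i j k ij jk ci ck.
  have cj : b j <= b j + w * b j.+1 by rewrite lerDl mulr_ge0 // ltW.
  have [x [xj bx]] : exists x, (x <= j)%N /\ 0 < b x.
    case: (pos_split b0 w0 ci) => h; [by exists i; rewrite ltnW | by exists i.+1].
  have [z [jz bz]] : exists z, (j < z)%N /\ 0 < b z.
    case: (pos_split b0 w0 ck) => h; [exists k | exists k.+1]; split => //.
    exact: ltnW.
  apply: lt_le_trans cj.
  case: (ltngtP x j) xj => // [xj' _|<- _]; last by [].
  exact: (niz x j z).
Qed.

End Seq.

Section Main.
Variable R : realFieldType.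

Lemma good_ext (b b' : nat -> R) : b =1 b' -> good b -> good b'.
Proof.
move=> e [h1 h2 h3]; split.
- by move=> k; rewrite -e.
- by move=> k; rewrite -!e.
- by move=> i j k ij jk; rewrite -!e; apply: h3.
Qed.

Lemma Psi_good n (a : nat -> R) (y : 'I_n -> R) : good a -> (forall k, 0 < y k) ->
  forall U, good (fun m => Psi a y U m).
Proof.
move=> ga yp U; move Ne: #|U| => N; elim: N U Ne => [|N IH] U Ne.
  move/eqP: Ne; rewrite cards_eq0 => /eqP ->.
  by apply: good_ext ga => m; rewrite Psi_set0.
have : U != set0 by rewrite -card_gt0 Ne.
case/set0Pn => x xU.
apply: (@good_ext (fun m => Psi a y (U :\ x) m + y x * Psi a y (U :\ x) m.+1)).
  by move=> m; rewrite -Psi_rec.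
apply: good_shift => //; apply: IH.
by move: Ne; rewrite (cardsD1 x U) xU add1n => -[].
Qed.

Lemma Rayleigh_expr n (a : nat -> R) (i j : 'I_n) (y : 'I_n -> R) : i != j ->
  let Z := G (cf a setT 0) in
  let U2 := setT :\ i :\ j in
  (mderiv i Z).@[y] * (mderiv j Z).@[y] - (mderiv j (mderiv i Z)).@[y] * Z.@[y]
  = Psi a y U2 1 ^+ 2 - Psi a y U2 0 * Psi a y U2 2.
Proof.
move=> ij Z U2.
have jU : j \in setT :\ i by rewrite in_setD1 eq_sym ij in_setT.
have iU : i \in setT :\ j by rewrite in_setD1 ij in_setT.
rewrite /Z !G_cf_deriv ?in_setT // !G_cf_eval.
have e2 : setT :\ j :\ i = U2.
  by apply/setP => k; rewrite /U2 !in_setD1 andbCA.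
rewrite (@Psi_rec _ _ _ _ setT 0 i) ?in_setT //.
rewrite (Psi_rec _ _ 0 jU) (Psi_rec _ _ 1 jU) (Psi_rec _ _ 1 iU) e2 -/U2.
ring.
Qed.

End Main.

Section Conv.
Variable R : realFieldType.
Variable n : nat.

Lemma prod_le_t (A : {set 'I_n}) (F : 'I_n -> R) t k : k \in A ->
  (forall i, i \in A -> 0 <= F i <= 1) -> F k <= t -> \prod_(i in A) F i <= t.
Proof.
move=> kA h Fk; rewrite (bigD1 k) //=.
have r1 : \prod_(i in A | i != k) F i <= 1.
  by apply: prodr_ile1 => i /andP[iA _]; apply: h.
have r0 : 0 <= \prod_(i in A | i != k) F i.
  by apply: prodr_ge0 => i /andP[iA _]; case/andP: (h i iA).
have f0 : 0 <= F k by case/andP: (h k kA).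
by rewrite -[t]mulr1; apply: ler_pM.
Qed.

Definition yv (t : R) (P F : {set 'I_n}) (k : 'I_n) : R :=
  if k \in P then t^-1 else if k \in F then 1 else t.

Lemma e_split t (P F g : {set 'I_n}) : t != 0 ->
  t ^+ #|P| * \prod_(k in g) yv t P F k
  = \prod_(k in P :\: g) t * \prod_(k in g :\: P) yv t P F k.
Proof.
move=> t0; rewrite -(prodr_const (mem P)) (@big_setID _ _ _ _ P g) (@big_setID _ _ _ _ g P) /= mulrACA.
rewrite setIC -big_split /= big1 ?mul1r // => k; rewrite in_setI => /andP[_ kP].
by rewrite /yv kP mulfV.
Qed.

Lemma e_bounds t (P F g : {set 'I_n}) : 0 < t <= 1 ->
  let e := t ^+ #|P| * \prod_(k in g) yv t P F k in
  0 <= e /\ (if (P \subset g) && (g \subset P :|: F) then e = 1 else e <= t).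
Proof.
case/andP=> t0 t1 e.
have t0' : t != 0 by rewrite gt_eqF.
have f1 : forall k, k \in P :\: g -> 0 <= t <= 1 by move=> k _; rewrite ltW.
have f2 : forall k, k \in g :\: P -> 0 <= yv t P F k <= 1.
  move=> k; rewrite in_setD /yv => /andP[/negbTE -> _].
  by case: (k \in F); rewrite ?ler01 ?lexx // ltW.
have p1 : 0 <= \prod_(k in P :\: g) t <= 1.
  by rewrite prodr_ge0 ?prodr_ile1 // => k _; rewrite ltW.
have p2 : 0 <= \prod_(k in g :\: P) yv t P F k <= 1.
  by rewrite prodr_ile1 // andbT; apply: prodr_ge0 => k /f2 /andP[].
case/andP: p1 => p10 p11; case/andP: p2 => p20 p21.
rewrite /e e_split //; split; first exact: mulr_ge0.
case: ifP => [/andP[Pg gPF] | /negbT].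
  rewrite big1 ?mul1r; last by move=> k; rewrite (eqP (_ : P :\: g == set0)) ?in_set0 // setD_eq0.
  apply: big1 => k; rewrite in_setD /yv => /andP[/negbTE kP kg].
  by move/subsetP: gPF => /(_ k kg); rewrite in_setU kP /= => ->.
rewrite negb_and => /orP[/subsetPn [k kP kg] | /subsetPn [k kg kPF]].
  have h1 : \prod_(k in P :\: g) t <= t.
    by apply: (prod_le_t (k := k)) => //; rewrite in_setD kg kP.
  by apply: le_trans (ler_pM p10 p20 h1 p21) _; rewrite mulr1.
move: kPF; rewrite in_setU negb_or => /andP[kP kF].
have h2 : \prod_(k in g :\: P) yv t P F k <= t.
  apply: (prod_le_t (k := k)) => //; first by rewrite in_setD kg kP.
  by rewrite /yv (negbTE kP) (negbTE kF).
by apply: le_trans (ler_pM p10 p20 p11 h2) _; rewrite mul1r.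
Qed.


Variable a : nat -> R.
Hypothesis a0 : forall k, 0 <= a k.

Definition X0 (U P F : {set 'I_n}) m :=
  \sum_(g : {set 'I_n} | (g \subset U) && ((P \subset g) && (g \subset P :|: F)))
     a (#|g| + m)%N.
Definition Kb (U : {set 'I_n}) m := \sum_(g : {set 'I_n} | g \subset U) a (#|g| + m)%N.

Lemma Psi_bounds (U P F : {set 'I_n}) m t : 0 < t <= 1 ->
  X0 U P F m <= t ^+ #|P| * Psi a (yv t P F) U m <= X0 U P F m + t * Kb U m.
Proof.
move=> ht; rewrite /Psi mulr_sumr.
rewrite (eq_bigr (fun g : {set 'I_n} => a (#|g| + m)%N * (t ^+ #|P| * \prod_(k in g) yv t P F k)));
  last by move=> g _; rewrite mulrCA.
rewrite (bigID (fun g : {set 'I_n} => (P \subset g) && (g \subset P :|: F))) /=.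
have -> : \sum_(g : {set 'I_n} | (g \subset U) && ((P \subset g) && (g \subset P :|: F)))
   a (#|g| + m)%N * (t ^+ #|P| * \prod_(k in g) yv t P F k) = X0 U P F m.
  apply: eq_bigr => g /andP[_ c].
  by have [_] := e_bounds P F g ht; rewrite c => ->; rewrite mulr1.
set S2 := \sum_(g | _ && ~~ _) _.
have S20 : 0 <= S2.
  apply: sumr_ge0 => g _; apply: mulr_ge0 => //.
  by have [] := e_bounds P F g ht.
have S2K : S2 <= t * Kb U m.
  apply: (@le_trans _ _ (t * \sum_(g : {set 'I_n} | (g \subset U) && ~~ ((P \subset g) && (g \subset P :|: F))) a (#|g| + m)%N)).
    rewrite mulr_sumr; apply: ler_sum => g /andP[_ /negbTE c].
    have [_] := e_bounds P F g ht; rewrite c => h.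
    by rewrite mulrC; apply: ler_wpM2r.
  case/andP: ht => t0 _; rewrite ler_pM2l // /Kb.
  rewrite [X in _ <= X](bigID (fun g : {set 'I_n} => (P \subset g) && (g \subset P :|: F))) /=.
  by rewrite lerDr; apply: sumr_ge0.
by rewrite lerDl S20 lerD2l.
Qed.


Lemma lim0 (Q B K : R) : 0 <= B -> 0 <= K ->
  (forall t, 0 < t <= 1 -> Q <= (B + t * K) ^+ 2) -> Q <= B ^+ 2.
Proof.
move=> B0 K0 h; rewrite leNgt; apply/negP => hQ.
set d := Q - B ^+ 2.
have d0 : 0 < d by rewrite subr_gt0.
set M := 2 * B * K + K ^+ 2.
have M0 : 0 <= M by rewrite addr_ge0 ?mulr_ge0 ?exprn_ge0 // ler0n.
set t := d / (d + M).
have dM : 0 < d + M by rewrite ltr_wpDr.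
have t0 : 0 < t by rewrite divr_gt0.
have tdM : t * (d + M) = d by rewrite /t mulfVK // gt_eqF.
have t1 : t <= 1.
  by rewrite -(ler_pM2r dM) mul1r tdM lerDl.
have := h t; rewrite t0 t1 => /(_ isT) hq.
have tM : t * M < d.
  have : 0 < t * d by rewrite mulr_gt0.
  have : t * d + t * M = d by rewrite -mulrDr.
  lra.
have : (B + t * K) ^+ 2 <= B ^+ 2 + t * M.
  rewrite /M; have tK : t * (t * K ^+ 2) <= t * K ^+ 2.
    by rewrite ler_piMl // mulr_ge0 ?exprn_ge0 // ltW.
  have -> : (B + t * K) ^+ 2 = B ^+ 2 + t * (2 * B * K) + t * (t * K ^+ 2) by ring.
  by rewrite mulrDr addrA lerD2l.
rewrite /d in tM; lra.
Qed.

Lemma conv_core (U P F : {set 'I_n}) :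
  (forall y : 'I_n -> R, (forall k, 0 < y k) -> Psi a y U 0 * Psi a y U 2 <= Psi a y U 1 ^+ 2) ->
  X0 U P F 0 * X0 U P F 2 <= X0 U P F 1 ^+ 2.
Proof.
move=> H.
have X0ge0 m : 0 <= X0 U P F m by apply: sumr_ge0.
apply: (@lim0 _ _ (Kb U 1)) => //; first by apply: sumr_ge0.
move=> t ht; have /andP[t0 t1] := ht.
set y := yv t P F.
have yp : forall k, 0 < y k.
  by move=> k; rewrite /y /yv; case: (k \in P); case: (k \in F); rewrite ?invr_gt0 ?ltr01.
have := H y yp; set c := t ^+ #|P|.
have c0 : 0 < c by rewrite exprn_gt0.
have [l0 _] := andP (Psi_bounds U P F 0 ht).
have [l2 _] := andP (Psi_bounds U P F 2 ht).
have [l1 u1] := andP (Psi_bounds U P F 1 ht).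
move=> HH.
have HH' : (c * Psi a y U 0) * (c * Psi a y U 2) <= (c * Psi a y U 1) ^+ 2.
  by rewrite mulrACA exprMn -expr2 ler_pM2l // exprn_gt0.
apply: le_trans (ler_pM (X0ge0 0) (X0ge0 2) l0 l2) _.
apply: le_trans HH' _.
rewrite !expr2; apply: ler_pM => //; exact: le_trans (X0ge0 1) l1.
Qed.

End Conv.

Section Glue.
Variable R : realFieldType.

Lemma sum_ge_term (I : finType) (Pr : pred I) (F : I -> R) g0 :
  Pr g0 -> (forall g, Pr g -> 0 <= F g) -> F g0 <= \sum_(g | Pr g) F g.
Proof.
move=> p0 h; rewrite (bigD1 g0) //= lerDl; apply: sumr_ge0 => g /andP[pg _].
exact: h.
Qed.

Lemma exists_sub (T : finType) (U : {set T}) k : (k <= #|U|)%N ->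
  exists P : {set T}, P \subset U /\ #|P| = k.
Proof.
elim: k => [|k IH] hk; first by exists set0; rewrite sub0set cards0.
have [P [PU cP]] := IH (ltnW hk).
have : ~~ (U \subset P).
  apply/negP => UP; have := subset_leq_card UP; rewrite cP leqNgt hk //.
case/subsetPn => x xU xP; exists (x |: P); split.
  by rewrite subUset sub1set xU PU.
by rewrite cardsU1 xP cP.
Qed.

Lemma niz_from_gap (a : nat -> R) ell : (forall k, 0 <= a k) ->
  (forall p f, (p + f + 2 <= ell)%N -> (forall k, (p < k)%N -> (k <= p + f + 1)%N -> a k = 0) ->
     a p * a (p + f + 2)%N <= 0) ->
  forall i j k, (i < j)%N -> (j < k)%N -> (k <= ell)%N -> 0 < a i -> 0 < a k -> 0 < a j.
Proof.
move=> a0 gap i j k; move Ed: (k - i)%N => d.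
elim: d {-2}d (leqnn d) i j k Ed => [|D IH] d hd i j k Ed ij jk kl ai ak.
  by move: hd; rewrite leqn0 => /eqP dz; exfalso; move: Ed; rewrite dz; lia.
case: (pickP (fun m : 'I_k => (i < m)%N && (0 < a m))) => [m /andP[im am] | none].
  case: (ltngtP m j) => [mj | jm | <-] //.
  - have mk := ltn_ord m.
    apply: (IH (k - m)%N _ m j k) => //; lia.
  - have mk := ltn_ord m.
    apply: (IH (m - i)%N _ i j m) => //; lia.
exfalso.
have hz : forall x, (i < x)%N -> (x <= i + (k - i - 2) + 1)%N -> a x = 0.
  move=> x ix xk; have xk' : (x < k)%N by lia.
  have := none (Ordinal xk'); rewrite /= ix /= => /negbT; rewrite -leNgt => h.
  by apply/eqP; rewrite eq_le h a0.
have h := gap i (k - i - 2)%N ltac:(lia) hz.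
have e : (i + (k - i - 2) + 2 = k)%N by lia.
by rewrite e in h; have := mulr_gt0 ai ak; rewrite ltNge h.
Qed.

End Glue.


Definition aw (R : realFieldType) (E : finType) (omega : {set E} -> R) (r j : nat) : R :=
  \sum_(S : {set E} | (#|S| <= r)%N && (r - #|S| == j)%N) omega S.

Lemma Zflat_G (R : realFieldType) (E : finType) (omega : {set E} -> R) r ell :
  Zflat_spec omega r ell = G (cf (aw omega r) setT 0).
Proof.
rewrite /Zflat_spec /G.
transitivity (\sum_(S : {set E}) \sum_(h : {set 'I_ell})
  (if (#|S| <= r)%N && (#|h| == r - #|S|)%N then omega S else 0) *: 'X_[mesym1 h]).
  apply: eq_bigr => S _; case: ifP => hr /=.
    rewrite mesymE scaler_sumr big_mkcond; apply: eq_bigr => h _ /=.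
    by case: (_ == _); rewrite ?scale0r.
  by rewrite big1 // => h _; rewrite scale0r.
rewrite exchange_big; apply: eq_bigr => h _.
rewrite -scaler_suml /cf subsetT addn0 /aw [in RHS]big_mkcond; congr (_ *: _).
by apply: eq_bigr => S _; rewrite [(r - _ == _)%N]eq_sym.
Qed.

Theorem proposition4p14 (R : realType) (E : finType)
    (omega : {set E} -> R) (r s : nat) :
  (forall S, 0 <= omega S) ->
  (exists S, omega S != 0) ->
  (exists S, 0 < omega S /\ #|S| = r) ->
  (forall S, 0 < omega S -> (#|S| <= r)%N) ->
  (exists S, 0 < omega S /\ #|S| = s) ->
  (forall S, 0 < omega S -> (s <= #|S|)%N) ->
  (log_concave_on (fk omega) s r /\ no_internal_zeros_on (fk omega) s r)
  <-> Rayleigh (Zflat_spec omega r (r - s)).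
Proof.
move=> w0 _ [Sr [Srp Src]] hr [Ss [Ssp Ssc]] hs.
have sr : (s <= r)%N by rewrite -Ssc; apply: hr.
set ell := (r - s)%N.
set a := aw omega r.
have a0 : forall j, 0 <= a j by move=> j; apply: sumr_ge0.
have fa : forall k, (k <= r)%N -> fk omega k = a (r - k)%N.
  move=> k kr; apply: eq_bigl => S; apply/idP/idP.
    by move/eqP => ->; rewrite kr eqxx.
  by case/andP => h /eqP e; apply/eqP; lia.
have abig : forall j, (ell < j)%N -> a j = 0.
  move=> j hj; apply: big1 => S /andP[h /eqP e].
  case: (ltrP 0 (omega S)) => p; last by apply/eqP; rewrite eq_le p w0.
  by have := hs S p; lia.
rewrite Zflat_G; split.
- case=> LC NIZ.
  have ga : good a.
    split => //.
    + move=> m; case: (leqP (m + 2) ell) => hm.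
        have := LC (r - m.+1)%N ltac:(lia).
        rewrite !fa; try lia.
        have -> : (r - (r - m.+1).-1 = m.+2)%N by lia.
        have -> : (r - (r - m.+1).+1 = m)%N by lia.
        have -> : (r - (r - m.+1) = m.+1)%N by lia.
        by rewrite mulrC.
      by rewrite (abig m.+2) ?mulr0 ?sqr_ge0 //; lia.
    + move=> i j k ij jk ai ak.
      have kl : (k <= ell)%N.
        by rewrite leqNgt; apply/negP => /abig h; move: ak; rewrite h ltxx.
      have := NIZ (r - k)%N (r - j)%N (r - i)%N ltac:(lia) ltac:(lia) ltac:(lia) ltac:(lia).
      rewrite !fa; try lia.
      have -> : (r - (r - k) = k)%N by lia.
      have -> : (r - (r - j) = j)%N by lia.
      have -> : (r - (r - i) = i)%N by lia.
      have nz : a k * a i != 0 by rewrite mulf_neq0 // gt_eqF.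
      by move=> /(_ nz) h; rewrite lt_def h a0.
  split.
  + exact: G_multiaffine.
  + by apply: G_coef_ge0 => g; rewrite /cf; case: ifP.
  + move=> i j ij y yp.
    rewrite Rayleigh_expr // subr_ge0.
    by have [_ lc _] := Psi_good ga yp (setT :\ i :\ j); apply: lc.
- case=> _ _ RI.
  case: (ltnP ell 2) => hl.
    split; first by move=> k /andP[h1 h2]; exfalso; lia.
    by move=> i j k h1 h2 h3 h4; exfalso; lia.
  have h0 : (0 < ell)%N by lia.
  have h1 : (1 < ell)%N by lia.
  pose i0 : 'I_ell := Ordinal h0.
  pose j0 : 'I_ell := Ordinal h1.
  have ij : i0 != j0 by [].
  set U2 := setT :\ i0 :\ j0.
  have cU2 : #|U2| = (ell - 2)%N.
    have := cardsD1 i0 setT; have := cardsD1 j0 (setT :\ i0).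
    rewrite cardsT card_ord in_setT in_setD1 in_setT /= => e1 e2.
    rewrite /U2; lia.
  have H : forall y : 'I_ell -> R, (forall k, 0 < y k) ->
      Psi a y U2 0 * Psi a y U2 2 <= Psi a y U2 1 ^+ 2.
    move=> y yp; have := RI i0 j0 ij y yp.
    by rewrite Rayleigh_expr // subr_ge0.
  have LCa : forall p, (p + 2 <= ell)%N -> a p * a (p + 2)%N <= a (p + 1)%N ^+ 2.
    move=> p hp.
    have [P [PU cP]] := exists_sub (k := p) (U := U2) ltac:(lia).
    have := conv_core a0 P set0 H.
    have X0E : forall m, X0 a U2 P set0 m = a (p + m)%N.
      move=> m; rewrite /X0 (big_pred1 P) ?cP //.
      move=> g /=; rewrite setU0; apply/idP/idP.
        by case/andP=> _ /andP[Pg gP]; rewrite eqEsubset gP Pg.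
      by move/eqP ->; rewrite PU subxx.
    by rewrite !X0E addn0.
  have GAPa : forall p f, (p + f + 2 <= ell)%N ->
      (forall k, (p < k)%N -> (k <= p + f + 1)%N -> a k = 0) ->
      a p * a (p + f + 2)%N <= 0.
    move=> p f hpf hz.
    have [P [PU cP]] := exists_sub (k := p) (U := U2) ltac:(lia).
    have cD : (f <= #|U2 :\: P|)%N.
      by rewrite cardsD (setIidPr PU) cP cU2; lia.
    have [F [FU cF]] := exists_sub cD.
    have PF : P :&: F = set0.
      apply/setP => x; rewrite in_setI in_set0; apply/negP => /andP[xP xF].
      by move/subsetP: FU => /(_ x xF); rewrite in_setD xP.
    have cPF : #|P :|: F| = (p + f)%N.
      by rewrite cardsU PF cards0 subn0 cP cF.
    have FU2 : F \subset U2 by apply: subset_trans FU (subsetDl _ _).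
    have := conv_core a0 P F H.
    have X1 : X0 a U2 P F 1 = 0.
      apply: big1 => g /andP[_ /andP[Pg gPF]]; apply: hz.
        by have := subset_leq_card Pg; rewrite cP; lia.
      by have := subset_leq_card gPF; rewrite cPF; lia.
    have X0l : a p <= X0 a U2 P F 0.
      rewrite -cP -[#|P|]addn0; apply: (sum_ge_term (g0 := P)) => //.
      by rewrite PU subxx subsetUl.
    have X2l : a (p + f + 2)%N <= X0 a U2 P F 2.
      rewrite -cPF; apply: (sum_ge_term (g0 := P :|: F)) => //.
      by rewrite subUset PU FU2 subsetUl subxx.
    rewrite X1 expr0n /= => h.
    apply: le_trans h; apply: ler_pM => //.
  split.
  + move=> k /andP[sk kr].
    have := LCa (r - k.+1)%N ltac:(lia).
    rewrite !fa; try lia.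
    have -> : (r - k.+1 + 2 = r - k.-1)%N by lia.
    have -> : (r - k.+1 + 1 = r - k)%N by lia.
    by rewrite mulrC.
  + move=> i j k si ij' jk kr.
    rewrite !fa; try lia.
    rewrite mulf_eq0 negb_or => /andP[ai ak].
    have ai' : 0 < a (r - i)%N by rewrite lt_def ai a0.
    have ak' : 0 < a (r - k)%N by rewrite lt_def ak a0.
    have := niz_from_gap a0 GAPa (i := (r - k)%N) (j := (r - j)%N) (k := (r - i)%N)
      ltac:(lia) ltac:(lia) ltac:(lia) ak' ai'.
    by move=> h; rewrite gt_eqF.
Qed.
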